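(* Let $f(\mathbf{x})=\mathbf{x}^{T}A\mathbf{x}+b^{T}\mathbf{x}+1$ be a polynomial of degree $2$ ($A\in\mathbb{R}^{n\times n}$ symmetric, $A\neq0$, $b\in\mathbb{R}^n$) which admits a monic determinantal representation $f(\mathbf{x})=\det(I_k+L(\mathbf{x}))$, $L(\mathbf{x})=x_1A_1+\dots+x_nA_n$, with Hermitian (or real symmetric) $k\times k$ matrices $A_j$. Then the spectrahedron $S=\{\mathbf{x}\in\mathbb{R}^n: I_k+L(\mathbf{x})\succeq 0\}$ does not contain a full dimensional cone if and only if $A$ is negative semidefinite.
   Context: For $f(\mathbf{x})=\det(I+L(\mathbf{x}))$ of degree $d$, the spectrahedron $S=\{\mathbf{x}: I+L(\mathbf{x})\succeq 0\}$ is said to contain a full dimensional cone if there exists $\mathbf{x}\in\mathbb{R}^n$ such that $L(\mathbf{x})\succeq 0$ and $\operatorname{rank}L(\mathbf{x})=d$. *)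

(* Defs.v *)
(* Scalars live in a numeric closed field C (e.g. the complex
   numbers); "real" means Num.real, conjugation is Num.conj. *)
From HB Require Import structures.
From mathcomp Require Import all_boot all_order all_algebra.
Set Implicit Arguments. Unset Strict Implicit. Unset Printing Implicit Defensive.
Import Order.TTheory GRing.Theory Num.Theory.
Local Open Scope ring_scope.

Definition real_entries (C : numClosedFieldType) m n (M : 'M[C]_(m, n)) : Prop :=
  forall i j, M i j \is Num.real.

Definition herm_mx (C : numClosedFieldType) k (M : 'M[C]_k) : Prop :=
  M = (map_mx (fun z => z^*) M)^T.

Definition psd_mx (C : numClosedFieldType) k (M : 'M[C]_k) : Prop :=
  herm_mx M /\
  forall v : 'cV[C]_k, 0 <= ((map_mx (fun z => z^*) v)^T *m M *m v) 0 0.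

Definition nsd_mx (C : numClosedFieldType) n (A : 'M[C]_n) : Prop :=
  forall v : 'cV[C]_n, real_entries v -> (v^T *m A *m v) 0 0 <= 0.

Definition linpencil (C : numClosedFieldType) n k (As : 'I_n -> 'M[C]_k)
  (x : 'cV[C]_n) : 'M[C]_k := \sum_(j < n) x j 0 *: As j.

Definition quadpoly (C : numClosedFieldType) n (A : 'M[C]_n) (b : 'cV[C]_n)
  (x : 'cV[C]_n) : C := (x^T *m A *m x) 0 0 + (b^T *m x) 0 0 + 1.

(* S contains a full dimensional cone (d = degree of f) *)
Definition contains_full_cone (C : numClosedFieldType) n k
  (As : 'I_n -> 'M[C]_k) (d : nat) : Prop :=
  exists x : 'cV[C]_n, real_entries x /\ psd_mx (linpencil As x) /\ \rank (linpencil As x) = d.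

(* Main.v *)
Require Import Defs.
From HB Require Import structures.
From mathcomp Require Import all_boot all_order all_algebra.
From mathcomp Require Import sesquilinear spectral ring.
Import Order.TTheory GRing.Theory Num.Theory.
Local Open Scope ring_scope.
Local Open Scope sesquilinear_scope.
Set Implicit Arguments. Unset Strict Implicit. Unset Printing Implicit Defensive.

Lemma linpencilZ (C : numClosedFieldType) n k (As : 'I_n -> 'M[C]_k) t x :
  linpencil As (t *: x) = t *: linpencil As x.
Proof.
rewrite /linpencil scaler_sumr; apply: eq_bigr => j _.
by rewrite mxE scalerA.
Qed.

Lemma quadpolyZ (C : numClosedFieldType) n (A : 'M[C]_n) b t x :
  quadpoly A b (t *: x) = t ^+ 2 * (x^T *m A *m x) 0 0 + t * (b^T *m x) 0 0 + 1.
Proof.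
rewrite /quadpoly.
have -> : (t *: x)^T = t *: x^T by apply/matrixP=> i j; rewrite !mxE.
rewrite -!scalemxAl -!scalemxAr !mxE.
by rewrite mulrA expr2.
Qed.

Lemma realZ (C : numClosedFieldType) m n (t : C) (x : 'M[C]_(m,n)) :
  t \is Num.real -> real_entries x -> real_entries (t *: x).
Proof. by move=> ht hx i j; rewrite mxE rpredM. Qed.

Lemma herm_pencil (C : numClosedFieldType) n k (As : 'I_n -> 'M[C]_k) x :
  (forall j, herm_mx (As j)) -> real_entries x ->
  linpencil As x \is hermsymmx.
Proof.
move=> hAs hx; rewrite is_hermitianmxE expr0 scale1r; apply/eqP/matrixP => i j.
rewrite !mxE /linpencil !summxE rmorph_sum; apply: eq_bigr => l _.
rewrite !mxE rmorphM /= conj_Creal ?hx //; congr (_ * _).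
by rewrite {1}(hAs l) !mxE.
Qed.

Lemma herm_pencil' (C : numClosedFieldType) n k (As : 'I_n -> 'M[C]_k) x :
  (forall j, herm_mx (As j)) -> real_entries x ->
  herm_mx (linpencil As x).
Proof.
move=> hAs hx; have := herm_pencil hAs hx.
rewrite is_hermitianmxE expr0 scale1r => /eqP hM.
by rewrite /herm_mx map_trmx.
Qed.

Lemma rank_unit_conj (C : numClosedFieldType) k (P X : 'M[C]_k) :
  P \is unitarymx -> \rank (P^t* *m X *m P) = \rank X.
Proof.
move=> uP; rewrite mxrankMfree ?row_free_unit ?unitarymx_unit //.
rewrite -mxrank_tr trmx_mul mxrankMfree ?mxrank_tr // row_free_unit.
by rewrite unitmx_tr unitarymx_unit // trmxC_unitary.
Qed.

Definition nzset (C : numClosedFieldType) k (d : 'rV[C]_k) := [set i | d 0 i != 0].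

Lemma rank_diag_ub (C : numClosedFieldType) k (d : 'rV[C]_k) :
  (\rank (diag_mx d) <= #|nzset d|)%N.
Proof.
have -> : diag_mx d = \sum_(i | d 0 i != 0) d 0 i *: delta_mx i i.
  rewrite diag_mx_sum_delta (bigID (fun i => d 0 i != 0)) /=.
  rewrite [X in _ + X]big1 ?addr0 // => i; rewrite negbK => /eqP->.
  by rewrite scale0r.
rewrite -sum1_card.
have -> : (\sum_(i in nzset d) 1 = \sum_(i | (d 0 i != 0)%R) 1)%N.
  by apply: eq_bigl => i; rewrite /nzset inE.
apply: (big_ind2 (fun (X : 'M[C]_k) (m : nat) => \rank X <= m)%N).
- by rewrite mxrank0.
- move=> X1 m1 X2 m2 h1 h2; apply: leq_trans (mxrank_add _ _) _.
  exact: leq_add.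
- by move=> i _; apply: leq_trans (mxrank_scale _ _) _; rewrite mxrank_delta.
Qed.

Lemma rank_diag_lb (C : numClosedFieldType) k (d : 'rV[C]_k) i j :
  i != j -> d 0 i != 0 -> d 0 j != 0 -> (2 <= \rank (diag_mx d))%N.
Proof.
move=> ij di dj.
pose f := fun r : 'I_2 => if r == 0 then i else j.
have finj : injective f.
  move=> r s; rewrite /f; case: (r =P 0) => [->|/eqP r0]; case: (s =P 0) => [->|/eqP s0] //.
  - by move=> eij; rewrite eij eqxx in ij.
  - by move=> eij; rewrite eij eqxx in ij.
  - move=> _; apply/val_inj; move: r0 s0; case: r => [[|[|r]] //= hr]; case: s => [[|[|s]] //= hs].
have -> : 2%N = \rank (mxsub f f (diag_mx d)).
  have -> : mxsub f f (diag_mx d) = diag_mx (\row_r d 0 (f r)).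
    by apply/matrixP=> r s; rewrite !mxE (inj_eq finj).
  rewrite mxrank_unit // unitmxE det_diag unitfE !big_ord_recr big_ord0 /= !mxE.
  by rewrite mul1r mulf_neq0.
rewrite -[diag_mx d]mulmx1 mxsub_mul.
apply: leq_trans (mxrankM_maxl _ _) _.
by rewrite mulmx1; apply: mxrankS; apply: rowsub_sub.
Qed.

Lemma unitary_tK (C : numClosedFieldType) k (P : 'M[C]_k) :
  P \is unitarymx -> P^t* *m P = 1%:M.
Proof. by move=> hP; rewrite -invmx_unitary // mulVmx // unitarymx_unit. Qed.

Lemma unitary_Kt (C : numClosedFieldType) k (P : 'M[C]_k) :
  P \is unitarymx -> P *m P^t* = 1%:M.
Proof. by move/unitarymxP. Qed.

Lemma spec_decomp (C : numClosedFieldType) k (M : 'M[C]_k) :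
  M \is hermsymmx ->
  M = (spectralmx M)^t* *m diag_mx (spectral_diag M) *m spectralmx M.
Proof.
move=> hM; rewrite -invmx_unitary ?spectral_unitarymx //.
exact/orthomx_spectralP/hermitian_normalmx.
Qed.

Lemma det_shift (C : numClosedFieldType) k (M P : 'M[C]_k) (d : 'rV[C]_k) t :
  P \is unitarymx -> M = P^t* *m diag_mx d *m P ->
  \det (1%:M + t *: M) = \prod_i (1 + t * d 0 i).
Proof.
move=> hP hM.
have -> : 1%:M + t *: M = P^t* *m diag_mx (\row_i (1 + t * d 0 i)) *m P.
  have -> : diag_mx (\row_i (1 + t * d 0 i)) = 1%:M + t *: diag_mx d.
    by apply/matrixP=> i j; rewrite !mxE; case: (i == j); rewrite ?mulr1n ?mulr0n ?mulr0 ?addr0.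
  by rewrite mulmxDr mulmxDl mulmx1 unitary_tK // hM scalemxAl scalemxAr.
rewrite !det_mulmx det_diag mulrC mulrA -det_mulmx unitary_Kt // det1 mul1r.
by apply: eq_bigr => i _; rewrite mxE.
Qed.

Lemma psd_of_nonneg (C : numClosedFieldType) k (M P : 'M[C]_k) (d : 'rV[C]_k) :
  P \is unitarymx -> M = P^t* *m diag_mx d *m P -> herm_mx M ->
  (forall i, 0 <= d 0 i) -> psd_mx M.
Proof.
move=> hP hM hh hd; split => // v.
set w := P *m v.
have -> : (map_mx (fun z => z^*) v)^T *m M *m v = w^t* *m diag_mx d *m w.
  by rewrite hM /w -!mulmxA trmx_mul map_mxM map_trmx mulmxA.
rewrite mul_mx_diag mxE; apply: sumr_ge0 => i _.
rewrite !mxE mulrC mulrA; apply: mulr_ge0 => //.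
exact: mul_conjC_ge0.
Qed.

Lemma nonneg_of_psd (C : numClosedFieldType) k (M P : 'M[C]_k) (d : 'rV[C]_k) :
  P \is unitarymx -> M = P^t* *m diag_mx d *m P -> psd_mx M ->
  forall i, 0 <= d 0 i.
Proof.
move=> hP hM [_ hv] i.
have := hv (P^t* *m (delta_mx i 0 : 'cV_k)).
have -> : map_mx (fun z => z^*) (P^t* *m (delta_mx i 0 : 'cV_k)) = P^T *m (delta_mx i 0 : 'cV_k).
  rewrite map_mxM; congr (_ *m _).
    by apply/matrixP=> a b; rewrite !mxE /= conjCK.
  by apply/matrixP=> a b; rewrite !mxE /= conjC_nat.
have K := unitary_Kt hP.
rewrite hM trmx_mul trmxK -!mulmxA (mulmxA P) K mul1mx (mulmxA P) K mul1mx.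
by rewrite trmx_delta -rowE -colE !mxE eqxx mulr1n.
Qed.



Lemma lin_size (C : numClosedFieldType) (c : C) : c != 0 ->
  size (c *: 'X + 1 : {poly C}) = 2%N /\ lead_coef (c *: 'X + 1 : {poly C}) = c.
Proof.
move=> c0; have hs : size (c *: 'X : {poly C}) = 2%N by rewrite size_scale // size_polyX.
split; first by rewrite size_polyDl hs // size_poly1.
by rewrite lead_coefDl ?hs ?size_poly1 // lead_coefZ lead_coefX mulr1.
Qed.

Lemma poly_key (C : numClosedFieldType) k (d : 'rV[C]_k) (a b : C) :
  (forall m : nat, \prod_i (1 + m%:R * d 0 i) = (m%:R)^+2 * a + m%:R * b + 1) ->
  (a != 0 -> #|nzset d| = 2%N /\ a = \prod_(i in nzset d) d 0 i) /\
  (a = 0 -> (#|nzset d| <= 1)%N).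
Proof.
move=> H.
pose p := \prod_(i in nzset d) (d 0 i *: 'X + 1 : {poly C}).
pose q := a *: 'X^2 + (b *: 'X + 1 : {poly C}).
have pq : p = q.
  apply/eqP; rewrite -subr_eq0; apply/eqP.
  apply: (@roots_geq_poly_eq0 _ _ [seq m%:R | m <- iota 0 (size (p - q))]).
  - apply/allP => z /mapP [m _ ->]; rewrite /root hornerD hornerN /p /q horner_prod.
    rewrite !(hornerD, hornerZ, hornerXn, hornerX, hornerC) subr_eq0; apply/eqP.
    apply: (etrans (_ : _ = \prod_i (1 + m%:R * d 0 i))); last by rewrite H; ring.
    rewrite [RHS](bigID (fun i => i \in nzset d)) /= [X in _ = _ * X]big1 ?mulr1.
      by apply: eq_bigr => i _; rewrite hornerD hornerZ hornerX hornerC addrC mulrC.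
    by move=> i; rewrite inE negbK => /eqP->; rewrite mulr0 addr0.
  - rewrite map_inj_uniq ?iota_uniq // => m1 m2 /eqP; rewrite eqr_nat => /eqP //.
  - by rewrite size_map size_iota.
have nz : forall i, i \in nzset d -> d 0 i *: 'X + 1 != 0 :> {poly C}.
  by move=> i; rewrite inE => /(lin_size) [hs _]; rewrite -size_poly_eq0 hs.
have sp : size p = (#|nzset d|).+1.
  rewrite /p size_prod // (eq_bigr (fun=> 2%N)); last first.
    by move=> i; rewrite inE => /lin_size [-> _].
  rewrite sum_nat_const; set s := #|_|.
  by rewrite muln2 -addnn -addSn addnK.
have lp : lead_coef p = \prod_(i in nzset d) d 0 i.
  rewrite /p lead_coef_prod; apply: eq_bigr => i.
  by rewrite inE => /lin_size [_ ->].
have sl : (size (b *: 'X + 1 : {poly C})%R <= 2)%N.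
  apply: leq_trans (size_polyD _ _) _; rewrite geq_max size_poly1 andbT.
  by apply: leq_trans (size_scale_leq _ _) _; rewrite size_polyX.
split.
- move=> a0.
  have sa : size (a *: 'X^2 : {poly C}) = 3%N by rewrite size_scale // size_polyXn.
  have sq : size q = 3%N by rewrite /q size_polyDl sa // ltnS.
  split; first by apply/eqP; rewrite -eqSS -sp pq sq.
  rewrite -lp pq /q lead_coefDl ?sa ?ltnS //.
  by rewrite lead_coefZ lead_coefXn mulr1.
- by move=> a0; rewrite -ltnS -sp pq /q a0 scale0r add0r.
Qed.

Lemma real_mul (C : numClosedFieldType) m n p (X : 'M[C]_(m, n)) (Y : 'M[C]_(n, p)) :
  real_entries X -> real_entries Y -> real_entries (X *m Y).
Proof.
move=> hX hY i j; rewrite mxE; apply: rpred_sum => l _; exact: rpredM.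
Qed.

Lemma real_tr (C : numClosedFieldType) m n (X : 'M[C]_(m, n)) :
  real_entries X -> real_entries X^T.
Proof. by move=> hX i j; rewrite mxE. Qed.

Lemma pencil_facts (C : numClosedFieldType) (n k : nat)
  (A : 'M[C]_n) (b : 'cV[C]_n) (As : 'I_n -> 'M[C]_k)
  (hAs : forall j, herm_mx (As j))
  (hrep : forall x : 'cV[C]_n, real_entries x ->
            quadpoly A b x = \det (1%:M + linpencil As x))
  x : real_entries x ->
  let d := spectral_diag (linpencil As x) in
  let a := (x^T *m A *m x) 0 0 in
  (a != 0 -> #|nzset d| = 2%N /\ a = \prod_(i in nzset d) d 0 i) /\
  (a = 0 -> (#|nzset d| <= 1)%N).
Proof.
move=> hx d a; apply: (@poly_key _ _ d a ((b^T *m x) 0 0)) => m.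
have hH := herm_pencil hAs hx.
rewrite -(det_shift (m%:R) (spectral_unitarymx _) (spec_decomp hH)).
rewrite -linpencilZ -hrep ?quadpolyZ //.
by apply: realZ => //; exact: realn.
Qed.

Local Close Scope sesquilinear_scope.

Theorem mainTheorem7 (C : numClosedFieldType) (n k : nat)
  (A : 'M[C]_n) (b : 'cV[C]_n) (As : 'I_n -> 'M[C]_k)
  (hAreal : real_entries A) (hAsym : A^T = A) (hA0 : A != 0)
  (hbreal : real_entries b)
  (hAs : forall j, herm_mx (As j))
  (hrep : forall x : 'cV[C]_n, real_entries x ->
            quadpoly A b x = \det (1%:M + linpencil As x)) :
  ~ contains_full_cone As 2 <-> nsd_mx A.
Proof.
have decomp := fun x (hx : real_entries x) =>
  spec_decomp (herm_pencil hAs hx).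
split.
- move=> ncone v hv.
  set a := (v^T *m A *m v) 0 0.
  have areal : a \is Num.real.
    exact: (real_mul (real_mul (real_tr hv) hAreal) hv).
  have [a0|a0] := boolP (a == 0); first by rewrite (eqP a0).
  case: (real_ltgtP areal (real0 _)) => [//|apos|]; last by move/eqP: a0.
  exfalso; apply: ncone.
  have [h1 _] := pencil_facts hAs hrep hv.
  have [card2 aprod] := h1 a0.
  set M := linpencil As v in aprod card2 *.
  set d := spectral_diag M in aprod card2 *.
  have dreal : forall l, d 0 l \is Num.real.
    move=> l; have := hermitian_spectral_diag_real (herm_pencil hAs hv).
    by move/mxOverP; apply.
  have /cards2P [i [j [ij Sij]]] : #|nzset d| == 2%N by rewrite card2.
  have iS : i \in nzset d by rewrite Sij !inE eqxx.
  have jS : j \in nzset d by rewrite Sij !inE eqxx orbT.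
  have di : d 0 i != 0 by move: iS; rewrite inE.
  have dj : d 0 j != 0 by move: jS; rewrite inE.
  have pij : 0 < d 0 i * d 0 j.
    move: apos; rewrite /a aprod Sij big_setU1 ?big_set1 //.
    by rewrite inE.
  have [sg [sg0 [sgnz sgd]]] : exists sg : C, sg \is Num.real /\ sg != 0 /\
      forall l, 0 <= sg * d 0 l.
    case: (real_ltgtP (dreal i) (real0 _)) => [dn|dp|/eqP]; last by rewrite (negPf di).
    + exists (-1); split; first by rewrite rpredN real1.
      split; first by rewrite oppr_eq0 oner_eq0.
      move: pij; rewrite nmulr_rgt0 // => djn l.
      case: (boolP (l \in nzset d)) => lS; last first.
        by move: lS; rewrite inE negbK => /eqP->; rewrite mulr0.
      move: lS; rewrite Sij !inE => /orP [] /eqP->.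
      * by rewrite mulN1r oppr_ge0 ltW.
      * by rewrite mulN1r oppr_ge0 ltW.
    + exists 1; split; first exact: real1.
      split; first exact: oner_neq0.
      move: pij; rewrite pmulr_rgt0 // => djp l; rewrite mul1r.
      case: (boolP (l \in nzset d)) => lS; last first.
        by move: lS; rewrite inE negbK => /eqP->.
      by move: lS; rewrite Sij !inE => /orP [] /eqP-> ; apply: ltW.
  exists (sg *: v); have hx' : real_entries (sg *: v) by apply: realZ.
  split => //; split.
  + apply: (@psd_of_nonneg _ _ _ (spectralmx M) (sg *: d)).
    * exact: spectral_unitarymx.
    * rewrite linpencilZ (decomp _ hv) -/M scalemxAl scalemxAr.
      congr (_ *m _ *m _); apply/matrixP => r s; rewrite !mxE.
      by case: (r == s); rewrite ?mulr1n ?mulr0n ?mulr0.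
    * exact: herm_pencil'.
    * by move=> l; rewrite mxE.
  + rewrite linpencilZ mxrank_scale_nz // (decomp _ hv) rank_unit_conj ?spectral_unitarymx //.
    apply/eqP; rewrite eqn_leq; apply/andP; split.
      by rewrite -card2; apply: rank_diag_ub.
    exact: (rank_diag_lb ij).
- move=> hnsd [x [hx [hpsd hrank]]].
  have [ha1 ha2] := pencil_facts hAs hrep hx.
  set M := linpencil As x in ha1 ha2 hpsd hrank.
  set d := spectral_diag M in ha1 ha2.
  have dnn := nonneg_of_psd (spectral_unitarymx M) (decomp _ hx) hpsd.
  have S2 : (2 <= #|nzset d|)%N.
    have hM := decomp _ hx; rewrite -/M in hM.
    rewrite -hrank {1}hM rank_unit_conj ?spectral_unitarymx //.
    exact: rank_diag_ub.
  set a := (x^T *m A *m x) 0 0 in ha1 ha2.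
  have [a0|a0] := eqVneq a 0.
    by move: (ha2 a0); rewrite leqNgt S2.
  have [_ aprod] := ha1 a0.
  have : 0 < a.
    rewrite aprod; apply: prodr_gt0 => l; rewrite inE => dl0.
    by rewrite lt_def dl0 dnn.
  by move=> /lt_le_trans /(_ (hnsd x hx)); rewrite ltxx.
Qed.
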